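(* Assume condition $(\star)$. Then, with $B^{\mathcal T}$ acting on $C^{\mathcal T}$ by right twisted convolution and $A^{\mathcal T}$ by left twisted convolution, $$\operatorname{End}_{A^{\mathcal T}}(C^{\mathcal T})=B^{\mathcal T},\qquad \operatorname{End}_{B^{\mathcal T}}(C^{\mathcal T})=A^{\mathcal T}.$$ Moreover $B^{\mathcal T}=1_\omega*A^{\mathcal T}*1_\omega$.
   Context: $\Bbbk$ is a field, $G$ a finite group, $\mathcal R$ a unital $\Bbbk$-algebra, free as a $\Bbbk$-module, with $G$ acting by $\Bbbk$-algebra automorphisms. For a finite $G$-set $Z$, $\mathcal R_G(Z)$ is the set of $G$-equivariant maps $Z\to\mathcal R$ ($f(gz)=g(f(z))$), $G$ acting diagonally on products. Let $(\Lambda,\omega)$ be a finite set with a distinguished element $\omega$; for each $\lambda\in\Lambda$ let $Y_\lambda$ be a finite $G$-set, $Y=\bigsqcup_\lambda Y_\lambda$, $X=Y_\omega$, and let $p_\lambda:X\to Y_\lambda$ be $G$-equivariant surjections with $p_\omega=\mathrm{id}$. Fix a twist $e\in\mathcal R_G(Y)$ (every $e(y)$ invertible). $A=\mathcal R_G(Y\times Y)$ with twisted convolution $(f*g)(x,y)=\sum_{z\in Y}f(x,z)e(z)^{-1}g(z,y)$ is a unital associative algebra; $A_{\lambda\mu}=\mathcal R_G(Y_\lambda\times Y_\mu)\subseteq A$ (extension by zero), $B=A_{\omega\omega}$, $C=\bigoplus_\lambda A_{\lambda\omega}$. Define: $S_\lambda\in A_{\omega\lambda}$, $S_\lambda(x,y)=\delta_{p_\lambda(x),y}e(y)$;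 $M_\lambda\in A_{\lambda\omega}$, $M_\lambda(y,x)=\delta_{y,p_\lambda(x)}e(y)$; $K_\lambda\in B$, $K_\lambda(x,x')=\delta_{p_\lambda(x),p_\lambda(x')}e(p_\lambda(x))$; $1_\lambda\in A_{\lambda\lambda}$, $1_\lambda(y,y')=\delta_{y,y'}e(y)$; $m\in\mathcal R_G(Y)$, $m(y)=\sum_{x\in p_\lambda^{-1}(y)}e(x)^{-1}e(y)$ for $y\in Y_\lambda$; for $t\in\mathcal R_G(X)$, $t_\omega\in B$, $t_\omega(x,x')=\delta_{x,x'}e(x)t(x)$. Let $\mathcal T\subseteq\mathcal R$ be a $G$-stable subring. Condition $(\star)$: for every $y\in Y$, $m(y)$ is invertible in $\mathcal R$ and $m(y),m(y)^{-1}\in\mathcal T$. $B^{\mathcal T}\subseteq B$ is the subalgebra generated by all $K_\lambda$ ($\lambda\in\Lambda$) and all $t_\omega$ with $t\in\mathcal R_G(X)$ taking values in $\mathcal T$; $A^{\mathcal T}\subseteq A$ is the subalgebra generated by $B^{\mathcal T}$ and all $S_\lambda,M_\lambda$; $C^{\mathcal T}=A^{\mathcal T}*1_\omega$, an $(A^{\mathcal T},B^{\mathcal T})$-bimodule. *)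

(* Defs.v *)
From HB Require Import structures.
From mathcomp Require Import all_boot all_order fingroup action all_algebra.
Set Implicit Arguments. Unset Strict Implicit. Unset Printing Implicit Defensive.
Import GRing.Theory.
Local Open Scope ring_scope.

Section TwistedConvolution.

Variables (k : fieldType) (R : algType k) (Y : finType).

(* elements of R^{Y x Y}; A = R_G(Y x Y) is the subset of equivariant ones *)
Definition mat := {ffun Y * Y -> R}.

(* einv y is the inverse e(y)^{-1} of the twist *)
Variable einv : Y -> R.

Definition tconv (f g : mat) : mat :=
  [ffun q => \sum_(z : Y) f (q.1, z) * einv z * g (z, q.2)].

Inductive gen (P : mat -> Prop) : mat -> Prop :=
| gen_base f : P f -> gen P f
| gen_zero : gen P 0
| gen_add f g : gen P f -> gen P g -> gen P (f + g)
| gen_scale (a : k) f : gen P f -> gen P (a *: f)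
| gen_mul f g : gen P f -> gen P g -> gen P (tconv f g).

(* Y = disjoint union of the Y_lambda, encoded by the label lab : Y -> Lambda;
   X = Y_omega = [pred y | lab y == omega];  p l restricted to X is p_l. *)
Variables (Lambda : finType) (omega : Lambda) (lab : Y -> Lambda).
Variables (p : Lambda -> Y -> Y) (e : Y -> R).

Definition inX (y : Y) : bool := lab y == omega.

Definition Sg (l : Lambda) : mat :=
  [ffun q => if inX q.1 && (p l q.1 == q.2) then e q.2 else 0].

Definition Mg (l : Lambda) : mat :=
  [ffun q => if inX q.2 && (q.1 == p l q.2) then e q.1 else 0].

Definition Kg (l : Lambda) : mat :=
  [ffun q => if [&& inX q.1, inX q.2 & p l q.1 == p l q.2]
             then e (p l q.1) else 0].

Definition oneL (l : Lambda) : mat :=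
  [ffun q => if (lab q.1 == l) && (q.1 == q.2) then e q.1 else 0].

Definition mfun (y : Y) : R :=
  \sum_(x : Y | inX x && (p (lab y) x == y)) einv x * e y.

Definition tdiag (t : Y -> R) : mat :=
  [ffun q => if inX q.1 && (q.1 == q.2) then e q.1 * t q.1 else 0].

Variables (gT : finGroupType) (toY : {action gT &-> Y}) (toR : {action gT &-> R}).
Variable T : {pred R}.

(* t : X -> R is G-equivariant and T-valued (only values on X matter) *)
Definition T_equivariant_on_X (t : Y -> R) : Prop :=
  (forall x, inX x -> t x \in T) /\
  (forall (g : gT) x, inX x -> t (toY x g) = toR (t x) g).

Definition BT : mat -> Prop :=
  gen (fun f => (exists l, f = Kg l) \/
                (exists2 t, T_equivariant_on_X t & f = tdiag t)).

Definition AT : mat -> Prop :=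
  gen (fun f => BT f \/ (exists l, f = Sg l) \/ (exists l, f = Mg l)).

Definition CT (c : mat) : Prop := exists2 a, AT a & c = tconv a (oneL omega).

End TwistedConvolution.

(* Main.v *)
Require Import Defs.
From HB Require Import structures.
From mathcomp Require Import all_boot all_order fingroup action all_algebra.
Set Implicit Arguments. Unset Strict Implicit. Unset Printing Implicit Defensive.
Import GRing.Theory.
Local Open Scope ring_scope.

Section Main.
Variables (k : fieldType) (R : algType k) (gT : finGroupType) (toR : {action gT &-> R}).
Hypothesis toR_add : forall (g : gT) (r s : R), toR (r + s) g = toR r g + toR s g.
Hypothesis toR_scale : forall (g : gT) (a : k) (r : R), toR (a *: r) g = a *: toR r g.
Hypothesis toR_mul : forall (g : gT) (r s : R), toR (r * s) g = toR r g * toR s g.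
Hypothesis toR_one : forall g : gT, toR 1 g = 1.
Variables (Lambda : finType) (omega : Lambda) (Y : finType) (toY : {action gT &-> Y}) (lab : Y -> Lambda).
Hypothesis lab_inv : forall (y : Y) (g : gT), lab (toY y g) = lab y.
Variable p : Lambda -> Y -> Y.
Hypothesis p_lab : forall l x, lab x = omega -> lab (p l x) = l.
Hypothesis p_surj : forall l y, lab y = l -> exists2 x, lab x = omega & p l x = y.
Hypothesis p_equiv : forall l x (g : gT), lab x = omega -> p l (toY x g) = toY (p l x) g.
Hypothesis p_omega : forall x, lab x = omega -> p omega x = x.
Variables (e einv : Y -> R).
Hypothesis e_equiv : forall (y : Y) (g : gT), e (toY y g) = toR (e y) g.
Hypothesis e_inv : forall y, e y * einv y = 1 /\ einv y * e y = 1.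
Variable T : {pred R}.
Hypothesis T_stable : forall (g : gT) (r : R), r \in T -> toR r g \in T.
Hypothesis star : forall y, exists2 mi : R,
            mfun einv omega lab p e y * mi = 1 /\ mi * mfun einv omega lab p e y = 1
          & mfun einv omega lab p e y \in T /\ mi \in T.

Local Notation mt := (mat R Y).
Local Notation conv := (tconv einv).
Local Notation one := (oneL lab e).
Local Notation ATt := (AT einv omega lab p e toY toR T).
Local Notation BTt := (BT einv omega lab p e toY toR T).
Local Notation CTt := (CT einv omega lab p e toY toR T).
Local Notation Sgl := (Sg omega lab p e).
Local Notation Mgl := (Mg omega lab p e).
Local Notation Kgl := (Kg omega lab p e).
Local Notation mf := (mfun einv omega lab p e).

Lemma tconvA (f g h : mt) : conv (conv f g) h = conv f (conv g h).
Proof.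
apply/ffunP => -[x y]; rewrite !ffunE /=.
transitivity (\sum_z \sum_w f (x,w) * einv w * g (w,z) * einv z * h (z,y)).
  apply: eq_bigr => z _; rewrite ffunE /= !big_distrl; apply: eq_bigr => w _ /=.
  by rewrite ?mulrA.
rewrite exchange_big; apply: eq_bigr => w _; rewrite ffunE /= big_distrr.
by apply: eq_bigr => z _ /=; rewrite ?mulrA.
Qed.

Lemma tconvDl (f g h : mt) : conv (f + g) h = conv f h + conv g h.
Proof.
apply/ffunP => q; rewrite !ffunE -big_split; apply: eq_bigr => z _ /=.
by rewrite ffunE mulrDl mulrDl.
Qed.

Lemma tconvDr (f g h : mt) : conv h (f + g) = conv h f + conv h g.
Proof.
apply/ffunP => q; rewrite !ffunE -big_split; apply: eq_bigr => z _ /=.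
by rewrite ffunE mulrDr.
Qed.

Lemma tconv0l (h : mt) : conv 0 h = 0.
Proof. by apply/ffunP => q; rewrite !ffunE big1 // => z _; rewrite ffunE !mul0r. Qed.

Lemma tconv0r (h : mt) : conv h 0 = 0.
Proof. by apply/ffunP => q; rewrite !ffunE big1 // => z _; rewrite ffunE mulr0. Qed.

Lemma tconvZl (a : k) (f g : mt) : conv (a *: f) g = a *: conv f g.
Proof.
apply/ffunP => q; rewrite !ffunE scaler_sumr; apply: eq_bigr => z _.
by rewrite ffunE -!scalerAl.
Qed.

Lemma tconvZr (a : k) (f g : mt) : conv f (a *: g) = a *: conv f g.
Proof.
apply/ffunP => q; rewrite !ffunE scaler_sumr; apply: eq_bigr => z _.
by rewrite ffunE scalerAr.
Qed.

Lemma tconv_suml (I : Type) (r : seq I) (P : pred I) (F : I -> mt) h :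
  conv (\sum_(i <- r | P i) F i) h = \sum_(i <- r | P i) conv (F i) h.
Proof. exact: (big_morph (fun f => conv f h) (fun f g => tconvDl f g h) (tconv0l h)). Qed.

Lemma tconv_sumr (I : Type) (r : seq I) (P : pred I) (F : I -> mt) h :
  conv h (\sum_(i <- r | P i) F i) = \sum_(i <- r | P i) conv h (F i).
Proof. exact: (big_morph (fun f => conv h f) (fun f g => tconvDr f g h) (tconv0r h)). Qed.

Lemma gen_sub (P Q : mt -> Prop) f :
  (forall g, P g -> gen einv Q g) -> gen einv P f -> gen einv Q f.
Proof.
move=> PQ; elim=> {f} [f /PQ //||||].
- exact: gen_zero.
- by move=> f g _ ? _ ?; apply: gen_add.
- by move=> a f _ ?; apply: gen_scale.
- by move=> f g _ ? _ ?; apply: gen_mul.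
Qed.

Lemma gen_sum (P : mt -> Prop) (I : Type) (r : seq I) (F : I -> mt) :
  (forall i, gen einv P (F i)) -> gen einv P (\sum_(i <- r) F i).
Proof.
move=> H; elim: r => [|i r IH]; first by rewrite big_nil; exact: gen_zero.
by rewrite big_cons; apply: gen_add.
Qed.

Lemma add_sum (P : mt -> Prop) (phi : mt -> mt) :
  P 0 -> (forall x y, P x -> P y -> P (x + y)) ->
  (forall x y, P x -> P y -> phi (x + y) = phi x + phi y) ->
  forall (I : Type) (r : seq I) (F : I -> mt), (forall i, P (F i)) ->
  phi (\sum_(i <- r) F i) = \sum_(i <- r) phi (F i) /\ P (\sum_(i <- r) F i).
Proof.
move=> P0 PD phiD I r F PF; elim: r => [|i r [IH1 IH2]].
  rewrite !big_nil; split => //.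
  have := phiD 0 0 P0 P0; rewrite addr0 => H.
  by apply: (addrI (phi 0)); rewrite addr0; exact: esym H.
by rewrite !big_cons phiD // IH1; split => //; apply: PD.
Qed.

Definition rowsupp l0 (f : mt) := forall q, lab q.1 != l0 -> f q = 0.
Definition colsupp l0 (f : mt) := forall q, lab q.2 != l0 -> f q = 0.

Lemma oneL_l l (f : mt) : conv (one l) f = [ffun q => if lab q.1 == l then f q else 0].
Proof.
apply/ffunP => -[x y]; rewrite !ffunE /= (bigD1 x) //= ffunE /= eqxx andbT big1 ?addr0.
  by case: eqP => _; rewrite ?mul0r // (proj1 (e_inv x)) mul1r.
by move=> z zx; rewrite ffunE /= [x == z]eq_sym (negbTE zx) andbF !mul0r.
Qed.

Lemma oneL_r l (f : mt) : conv f (one l) = [ffun q => if lab q.2 == l then f q else 0].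
Proof.
apply/ffunP => -[x y]; rewrite !ffunE /= (bigD1 y) //= ffunE /= eqxx andbT big1 ?addr0.
  by case: eqP => _; rewrite ?mulr0 // -mulrA (proj2 (e_inv y)) mulr1.
by move=> z zx; rewrite ffunE /= (negbTE zx) andbF !mulr0.
Qed.

Lemma rowmask l0 l f : rowsupp l0 f -> conv (one l) f = if l == l0 then f else 0.
Proof.
move=> sf; rewrite oneL_l; case: eqP => [->|n]; apply/ffunP => q; rewrite !ffunE.
  by case: eqP => // /eqP H; rewrite sf.
by case: eqP => // H; rewrite sf // H; apply/eqP.
Qed.

Lemma colmask l0 l f : colsupp l0 f -> conv f (one l) = if l == l0 then f else 0.
Proof.
move=> sf; rewrite oneL_r; case: eqP => [->|n]; apply/ffunP => q; rewrite !ffunE.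
  by case: eqP => // /eqP H; rewrite sf.
by case: eqP => // H; rewrite sf // H; apply/eqP.
Qed.

Lemma rowsupp_one l : rowsupp l (one l).
Proof. by move=> q /negbTE H; rewrite ffunE H. Qed.
Lemma colsupp_one l : colsupp l (one l).
Proof.
move=> q H; rewrite ffunE; case: ifP => // /andP[/eqP L /eqP E].
by rewrite -E L eqxx in H.
Qed.


Lemma oneL_idem l : conv (one l) (one l) = one l.
Proof. by rewrite (rowmask _ (@rowsupp_one l)) eqxx. Qed.

Definition Id : mt := \sum_l one l.

Lemma tconvIl (f : mt) : conv Id f = f.
Proof.
apply/ffunP => q; rewrite tconv_suml sum_ffunE.
rewrite (eq_bigr (fun l => if lab q.1 == l then f q else 0)); last first.
  by move=> l _; rewrite oneL_l ffunE.
rewrite -big_mkcond (big_pred1 (lab q.1)) // => l /=; exact: eq_sym.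
Qed.

Lemma tconvIr (f : mt) : conv f Id = f.
Proof.
apply/ffunP => q; rewrite tconv_sumr sum_ffunE.
rewrite (eq_bigr (fun l => if lab q.2 == l then f q else 0)); last first.
  by move=> l _; rewrite oneL_r ffunE.
rewrite -big_mkcond (big_pred1 (lab q.2)) // => l /=; exact: eq_sym.
Qed.

Lemma rowsupp_conv l f g : rowsupp l f -> rowsupp l (conv f g).
Proof. by move=> sf q H; rewrite ffunE big1 // => z _; rewrite sf // !mul0r. Qed.
Lemma colsupp_conv l f g : colsupp l g -> colsupp l (conv f g).
Proof. by move=> sg q H; rewrite ffunE big1 // => z _; rewrite sg // !mulr0. Qed.

Lemma Sg_row l : rowsupp omega (Sg omega lab p e l).
Proof. by move=> q H; rewrite ffunE /inX (negbTE H). Qed.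
Lemma Sg_col l : colsupp l (Sg omega lab p e l).
Proof.
move=> q H; rewrite ffunE /inX; case: eqP => //= Hx; case: eqP => // E.
by rewrite -E p_lab // eqxx in H.
Qed.
Lemma Mg_col l : colsupp omega (Mg omega lab p e l).
Proof. by move=> q H; rewrite ffunE /inX (negbTE H). Qed.
Lemma Mg_row l : rowsupp l (Mg omega lab p e l).
Proof.
move=> q H; rewrite ffunE /inX; case: eqP => //= Hx; case: eqP => // E.
by rewrite E p_lab // eqxx in H.
Qed.
Lemma Kg_row l : rowsupp omega (Kg omega lab p e l).
Proof. by move=> q H; rewrite ffunE /inX (negbTE H). Qed.
Lemma Kg_col l : colsupp omega (Kg omega lab p e l).
Proof. by move=> q H; rewrite ffunE /inX (negbTE H) andbF. Qed.
Lemma tdiag_row t : rowsupp omega (tdiag omega lab e t).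
Proof. by move=> q H; rewrite ffunE /inX (negbTE H). Qed.
Lemma tdiag_col t : colsupp omega (tdiag omega lab e t).
Proof.
move=> q H; rewrite ffunE; case: ifP => // /andP[/eqP L /eqP E].
by rewrite /inX -E L eqxx in H.
Qed.

Lemma Kg_omega : Kg omega lab p e omega = one omega.
Proof.
apply/ffunP => -[x y]; rewrite !ffunE /= /inX.
have [Hx|Hx] := eqVneq (lab x) omega; last by [].
have [<-|nxy] := eqVneq x y; first by rewrite Hx !eqxx p_omega.
have [Hy|Hy] := eqVneq (lab y) omega; last by rewrite andbF.
by rewrite !p_omega // (negbTE nxy).
Qed.

Lemma Mg_omega : Mg omega lab p e omega = one omega.
Proof.
apply/ffunP => -[x y]; rewrite !ffunE /= /inX.
have [<-|nxy] := eqVneq x y.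
  have [Hx|Hx] := eqVneq (lab x) omega; last by [].
  by rewrite p_omega // eqxx.
have [Hy|Hy] := eqVneq (lab y) omega; last by rewrite !andbF.
by rewrite p_omega // (negbTE nxy) !andbF.
Qed.

Lemma Sg_omega : Sg omega lab p e omega = one omega.
Proof.
apply/ffunP => -[x y]; rewrite !ffunE /= /inX.
have [Hx|Hx] := eqVneq (lab x) omega; last by [].
by rewrite p_omega //; case: eqP => // <-.
Qed.

Lemma SM_K l : conv (Sg omega lab p e l) (Mg omega lab p e l) = Kg omega lab p e l.
Proof.
apply/ffunP => -[x y]; rewrite !ffunE /= (bigD1 (p l x)) //= big1 ?addr0.
  rewrite !ffunE /= eqxx andbT.
  case: (inX omega lab x); case: (inX omega lab y); case: eqP => //= _;
    by rewrite ?mul0r ?mulr0 // (proj1 (e_inv _)) mul1r.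
by move=> z zx; rewrite ffunE /= [p l x == z]eq_sym (negbTE zx) andbF !mul0r.
Qed.

Lemma BT_supp f : BTt f -> rowsupp omega f /\ colsupp omega f.
Proof.
elim=> {f} [f [[l ->]|[t _ ->]]||||].
- by split; [apply: Kg_row | apply: Kg_col].
- by split; [apply: tdiag_row | apply: tdiag_col].
- by split=> q _; rewrite ffunE.
- move=> f g _ [r1 c1] _ [r2 c2]; split=> q H; rewrite ffunE.
    by rewrite r1 ?r2 // addr0.
  by rewrite c1 ?c2 // addr0.
- by move=> a f _ [r1 c1]; split=> q H; rewrite ffunE; [rewrite r1 | rewrite c1] => //; rewrite scaler0.
- move=> f g _ [r1 c1] _ [r2 c2]; split.
    exact: rowsupp_conv.
  exact: colsupp_conv.
Qed.

Lemma BT_l f : BTt f -> conv (one omega) f = f.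
Proof. by case/BT_supp => r _; rewrite (rowmask _ r) eqxx. Qed.
Lemma BT_r f : BTt f -> conv f (one omega) = f.
Proof. by case/BT_supp => _ c; rewrite (colmask _ c) eqxx. Qed.

Lemma BT_one : BTt (one omega).
Proof. rewrite -Kg_omega; apply: gen_base; left; by exists omega. Qed.

Lemma BT_K l : BTt (Kgl l).
Proof. apply: gen_base; left; by exists l. Qed.

Lemma BT_AT f : BTt f -> ATt f.
Proof. by move=> H; apply: gen_base; left. Qed.

Lemma AT_one : ATt (one omega).
Proof. exact: BT_AT BT_one. Qed.
Lemma AT_S l : ATt (Sgl l).
Proof. apply: gen_base; right; left; by exists l. Qed.
Lemma AT_M l : ATt (Mgl l).
Proof. apply: gen_base; right; right; by exists l. Qed.

Lemma zeroMS l m : conv (conv (Mgl l) 0) (Sgl m) = 0.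
Proof. by rewrite tconv0r tconv0l. Qed.

Definition KP (a : mt) l m :=
  exists2 b, BTt b & conv (conv (one l) a) (one m) = conv (conv (Mgl l) b) (Sgl m).

Lemma KP_sum l m (I : Type) (s : seq I) (F : I -> mt) :
  (forall i, exists2 b, BTt b & F i = conv (conv (Mgl l) b) (Sgl m)) ->
  exists2 b, BTt b & \sum_(i <- s) F i = conv (conv (Mgl l) b) (Sgl m).
Proof.
move=> H; elim: s => [|i s [b Hb E]].
  by exists 0; [exact: gen_zero | rewrite big_nil zeroMS].
have [b' Hb' E'] := H i.
exists (b' + b); first exact: gen_add.
by rewrite big_cons E E' tconvDr tconvDl.
Qed.

Lemma decomp (f g : mt) l m :
  conv (conv (one l) (conv f g)) (one m) =
  \sum_n conv (conv (conv (one l) f) (one n)) (conv (conv (one n) g) (one m)).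
Proof.
rewrite -{1}(tconvIl g) tconv_suml tconv_sumr tconv_sumr tconv_suml.
apply: eq_bigr => n _.
by rewrite -{1}(oneL_idem n) !tconvA.
Qed.

Lemma key a : ATt a -> forall l m, KP a l m.
Proof.
elim=> {a} [f [Hf|[[l0 ->]|[l0 ->]]] l m||||].
- have [r c] := BT_supp Hf.
  rewrite /KP (rowmask _ r); case: eqP => [->|_]; last first.
    by exists 0; [exact: gen_zero | rewrite tconv0l zeroMS].
  rewrite (colmask _ c); case: eqP => [->|_]; last first.
    by exists 0; [exact: gen_zero | rewrite zeroMS].
  by exists f => //; rewrite Mg_omega // Sg_omega // BT_l // BT_r.
- rewrite /KP (rowmask _ (@Sg_row l0)); case: eqP => [->|_]; last first.
    by exists 0; [exact: gen_zero | rewrite tconv0l zeroMS].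
  rewrite (colmask _ (@Sg_col l0)); case: eqP => [->|_]; last first.
    by exists 0; [exact: gen_zero | rewrite zeroMS].
  exists (one omega); first exact: BT_one.
  by rewrite Mg_omega // oneL_idem (rowmask _ (@Sg_row l0)) eqxx.
- rewrite /KP (rowmask _ (@Mg_row l0)); case: eqP => [->|_]; last first.
    by exists 0; [exact: gen_zero | rewrite tconv0l zeroMS].
  rewrite (colmask _ (@Mg_col l0)); case: eqP => [->|_]; last first.
    by exists 0; [exact: gen_zero | rewrite zeroMS].
  exists (one omega); first exact: BT_one.
  by rewrite Sg_omega // tconvA oneL_idem (colmask _ (@Mg_col l0)) eqxx.
- by move=> l m; exists 0; [exact: gen_zero | rewrite tconv0r tconv0l zeroMS].
- move=> f g _ IHf _ IHg l m; have [b1 H1 E1] := IHf l m; have [b2 H2 E2] := IHg l m.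
  exists (b1 + b2); first exact: gen_add.
  by rewrite tconvDr tconvDl E1 E2 tconvDr tconvDl.
- move=> a f _ IHf l m; have [b1 H1 E1] := IHf l m.
  exists (a *: b1); first exact: gen_scale.
  by rewrite tconvZr tconvZl E1 tconvZr tconvZl.
- move=> f g _ IHf _ IHg l m; rewrite /KP decomp; apply: KP_sum => n.
  have [b1 H1 E1] := IHf l n; have [b2 H2 E2] := IHg n m.
  exists (conv (conv b1 (Kgl n)) b2); first by apply: gen_mul => //; apply: gen_mul => //; apply: BT_K.
  by rewrite E1 E2 -SM_K !tconvA.
Qed.

Lemma key_omega a : ATt a -> BTt (conv (conv (one omega) a) (one omega)).
Proof.
move=> /key /(_ omega omega) [b Hb ->].
by rewrite Mg_omega // Sg_omega // BT_l // BT_r.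
Qed.
Lemma toR0 g : toR 0 g = 0.
Proof. by have := toR_scale g 0 0; rewrite !scale0r. Qed.

Lemma toR_sum g (I : Type) (r : seq I) (P : pred I) (F : I -> R) :
  toR (\sum_(i <- r | P i) F i) g = \sum_(i <- r | P i) toR (F i) g.
Proof. exact: (big_morph (fun x => toR x g) (toR_add g) (toR0 g)). Qed.

Lemma einv_equiv y g : einv (toY y g) = toR (einv y) g.
Proof.
have [h1 h2] := e_inv (toY y g); have [k1 k2] := e_inv y.
by rewrite -[LHS]mulr1 -(toR_one g) -k1 toR_mul mulrA -e_equiv h2 mul1r.
Qed.

Lemma mf_equiv y g : mf (toY y g) = toR (mf y) g.
Proof.
rewrite /mfun lab_inv toR_sum (reindex_inj (act_inj toY g)) /=.
apply: eq_big => x.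
  rewrite /inX lab_inv; case: eqP => //= Hx.
  by rewrite p_equiv // (inj_eq (act_inj toY g)).
by move=> _; rewrite einv_equiv e_equiv toR_mul.
Qed.

Lemma exmi y : exists mi, [&& mf y * mi == 1, mi * mf y == 1 & mi \in T].
Proof.
have [mi [h1 h2] [_ h3]] := star y; exists mi.
by rewrite h1 h2 h3 !eqxx.
Qed.

Definition mi y := xchoose (exmi y).

Lemma miP y : [/\ mf y * mi y = 1, mi y * mf y = 1 & mi y \in T].
Proof. by have /and3P[/eqP ? /eqP ? ?] := xchooseP (exmi y). Qed.

Lemma mi_equiv y g : mi (toY y g) = toR (mi y) g.
Proof.
have [a1 _ _] := miP (toY y g); have [_ b2 _] := miP y.
by rewrite -[RHS]mulr1 -a1 mulrA mf_equiv -toR_mul b2 toR_one mul1r.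
Qed.

Definition tl l y := mi (p l y).

Lemma tl_eq l : T_equivariant_on_X omega lab toY toR T (tl l).
Proof.
split => [x _ | g x Hx]; first by have [] := miP (p l x).
by rewrite /tl p_equiv ?(eqP Hx) // mi_equiv.
Qed.

Definition Dl l := tdiag omega lab e (tl l).

Lemma BT_D l : BTt (Dl l).
Proof. apply: gen_base; right; exists (tl l) => //; exact: tl_eq. Qed.

Lemma MD l t : conv (Mgl l) (tdiag omega lab e t) =
  [ffun q => if inX omega lab q.2 && (q.1 == p l q.2) then e q.1 * t q.2 else 0].
Proof.
apply/ffunP => -[y x]; rewrite !ffunE /= (bigD1 x) //= big1 ?addr0.
  rewrite !ffunE /= eqxx andbT.
  case: (inX omega lab x); case: (y == p l x) => /=; rewrite ?mul0r ?mulr0 //.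
  by rewrite mulrA -(mulrA (e y)) (proj2 (e_inv x)) mulr1.
by move=> z zx; rewrite !ffunE /= (negbTE zx) andbF mulr0.
Qed.

Lemma oneL_MDS l : one l = conv (conv (Mgl l) (Dl l)) (Sgl l).
Proof.
apply/ffunP => -[y y']; rewrite MD !ffunE /=.
rewrite (eq_bigr (fun x => if inX omega lab x && (p l x == y) then
   (if y == y' then e y * mi y * (einv x * e y) else 0) else 0)); last first.
  move=> x _; rewrite !ffunE /=; case Hx: (inX omega lab x) => /=; rewrite ?mul0r //.
  case: (y =P p l x) => [->|ne].
    rewrite eqxx /tl; case: eqP => [<-|_]; by rewrite ?mulr0 // !mulrA.
  have -> : (p l x == y) = false by apply/eqP => E; apply: ne; rewrite E.
  by rewrite !mul0r.
rewrite -big_mkcond /=.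
have [E|ne] := eqVneq y y'; last first.
  by rewrite andbF big1.
rewrite andbT; case: (lab y =P l) => [Hl|Hl]; last first.
  rewrite big1 // => x /andP[Hx /eqP E2]; exfalso; apply: Hl.
  by rewrite -E2 p_lab //; apply/eqP.
rewrite -big_distrr /=.
have -> : \sum_(i | inX omega lab i && (p l i == y)) einv i * e y = mf y by rewrite /mfun Hl.
by have [_ h _] := miP y; rewrite -mulrA h mulr1.
Qed.

Lemma AT_oneL l : ATt (one l).
Proof.
rewrite oneL_MDS; apply: gen_mul; last exact: AT_S.
apply: gen_mul; [exact: AT_M | exact: BT_AT (BT_D l)].
Qed.
Lemma CT_AT c : CTt c -> ATt c.
Proof. by case=> a Ha ->; apply: gen_mul => //; exact: AT_one. Qed.
Lemma CT_r c : CTt c -> conv c (one omega) = c.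
Proof. by case=> a _ ->; rewrite tconvA oneL_idem. Qed.
Lemma CT_intro x : ATt x -> conv x (one omega) = x -> CTt x.
Proof. by move=> H E; exists x. Qed.
Lemma CT_M l : CTt (Mgl l).
Proof. by apply: CT_intro; [exact: AT_M | rewrite (colmask _ (@Mg_col l)) eqxx]. Qed.
Lemma CT_one : CTt (one omega).
Proof. by apply: CT_intro; [exact: AT_one | rewrite oneL_idem]. Qed.
Lemma CT0 : CTt 0.
Proof. by apply: CT_intro; [exact: gen_zero | rewrite tconv0l]. Qed.
Lemma CT_add c c' : CTt c -> CTt c' -> CTt (c + c').
Proof.
move=> H H'; apply: CT_intro; first by apply: gen_add; apply: CT_AT.
by rewrite tconvDl !CT_r.
Qed.
Lemma CT_rB c b : CTt c -> BTt b -> CTt (conv c b).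
Proof.
move=> Hc Hb; apply: CT_intro; first by apply: gen_mul; [exact: CT_AT | exact: BT_AT].
by rewrite tconvA BT_r.
Qed.
Lemma CT_lA a c : ATt a -> CTt c -> CTt (conv a c).
Proof.
move=> Ha Hc; apply: CT_intro; first by apply: gen_mul => //; exact: CT_AT.
by rewrite tconvA CT_r.
Qed.

Lemma main :
  let conv := tconv einv in
  let AT' := AT einv omega lab p e toY toR T in
  let BT' := BT einv omega lab p e toY toR T in
  let CT' := CT einv omega lab p e toY toR T in
  (forall b c, BT' b -> CT' c ->
     CT' (conv c b) /\ forall a, AT' a -> conv a (conv c b) = conv (conv a c) b) /\
  (forall a c, AT' a -> CT' c ->
     CT' (conv a c) /\ forall b, BT' b -> conv (conv a c) b = conv a (conv c b)) /\
  (forall phi : mat R Y -> mat R Y,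
     (forall c, CT' c -> CT' (phi c)) ->
     (forall c c', CT' c -> CT' c' -> phi (c + c') = phi c + phi c') ->
     (forall a c, AT' a -> CT' c -> phi (conv a c) = conv a (phi c)) ->
     exists2 b, BT' b & forall c, CT' c -> phi c = conv c b) /\
  (forall b b', BT' b -> BT' b' -> (forall c, CT' c -> conv c b = conv c b') -> b = b') /\
  (forall phi : mat R Y -> mat R Y,
     (forall c, CT' c -> CT' (phi c)) ->
     (forall c c', CT' c -> CT' c' -> phi (c + c') = phi c + phi c') ->
     (forall b c, BT' b -> CT' c -> phi (conv c b) = conv (phi c) b) ->
     exists2 a, AT' a & forall c, CT' c -> phi c = conv a c) /\
  (forall a a', AT' a -> AT' a' -> (forall c, CT' c -> conv a c = conv a' c) -> a = a') /\
  (forall b, BT' b <->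
     exists2 a, AT' a & b = conv (conv (oneL lab e omega) a) (oneL lab e omega)).
Proof.
move=> conv AT' BT' CT'; subst conv AT' BT' CT'.
split; [|split; [|split; [|split; [|split; [|split]]]]].
- move=> b c Hb Hc; split; first exact: CT_rB.
  by move=> a _; rewrite tconvA.
- move=> a c Ha Hc; split; first exact: CT_lA.
  by move=> b _; rewrite tconvA.
- move=> phi phiC phiD phiA.
  have Hb1 := phiA _ _ AT_one CT_one; rewrite oneL_idem in Hb1.
  have Cb : CTt (phi (one omega)) := phiC _ CT_one.
  exists (phi (one omega)).
    by have := key_omega (CT_AT Cb); rewrite -Hb1 CT_r.
  move=> c Hc; rewrite -{1}(CT_r Hc) phiA //; [exact: CT_AT | exact: CT_one].
- move=> b b' Hb Hb' H; rewrite -(BT_l Hb) -(BT_l Hb'); exact: H CT_one.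
- move=> phi phiC phiD phiB.
  exists (\sum_l conv (conv (phi (Mgl l)) (Dl l)) (Sgl l)).
    apply: gen_sum => l; apply: gen_mul; last exact: AT_S.
    apply: gen_mul; [exact: CT_AT (phiC _ (CT_M l)) | exact: BT_AT (BT_D l)].
  move=> c Hc.
  have Hw : forall l, BTt (conv (Dl l) (conv (Sgl l) c)).
    move=> l; apply: gen_mul; first exact: BT_D.
    have := key_omega (gen_mul (AT_S l) (CT_AT Hc)).
    by rewrite -tconvA (rowmask _ (@Sg_row l)) eqxx tconvA CT_r.
  have HF : forall l, CTt (conv (Mgl l) (conv (Dl l) (conv (Sgl l) c))).
    by move=> l; apply: CT_rB; [exact: CT_M | exact: Hw].
  have Ec : c = \sum_l conv (Mgl l) (conv (Dl l) (conv (Sgl l) c)).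
    rewrite -{1}(tconvIl c) /Id tconv_suml; apply: eq_bigr => l _.
    by rewrite oneL_MDS !tconvA.
  rewrite {1}Ec (proj1 (add_sum CT0 CT_add phiD (index_enum Lambda) HF)).
  rewrite tconv_suml; apply: eq_bigr => l _.
  rewrite phiB; [by rewrite !tconvA | exact: Hw | exact: CT_M].
- move=> a a' _ _ H.
  rewrite -(tconvIr a) -(tconvIr a') /Id !tconv_sumr; apply: eq_bigr => l _.
  by rewrite oneL_MDS -!tconvA (H _ (CT_M l)).
- move=> b; split.
    by move=> Hb; exists b; [exact: BT_AT | rewrite BT_l // BT_r].
  by case=> a Ha ->; exact: key_omega.
Qed.
End Main.

Theorem theorem4
  (* the field k and the k-algebra R (free over k, automatic over a field) *)
  (k : fieldType) (R : algType k)
  (* the finite group G, acting on R by k-algebra automorphisms *)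
  (gT : finGroupType) (toR : {action gT &-> R})
  (toR_add : forall (g : gT) (r s : R), toR (r + s) g = toR r g + toR s g)
  (toR_scale : forall (g : gT) (a : k) (r : R), toR (a *: r) g = a *: toR r g)
  (toR_mul : forall (g : gT) (r s : R), toR (r * s) g = toR r g * toR s g)
  (toR_one : forall g : gT, toR 1 g = 1)
  (* Y = disjoint union of the finite G-sets Y_l, l in (Lambda, omega) *)
  (Lambda : finType) (omega : Lambda)
  (Y : finType) (toY : {action gT &-> Y}) (lab : Y -> Lambda)
  (lab_inv : forall (y : Y) (g : gT), lab (toY y g) = lab y)
  (* the G-equivariant surjections p_l : X = Y_omega -> Y_l, p_omega = id *)
  (p : Lambda -> Y -> Y)
  (p_lab : forall l x, lab x = omega -> lab (p l x) = l)
  (p_surj : forall l y, lab y = l -> exists2 x, lab x = omega & p l x = y)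
  (p_equiv : forall l x (g : gT), lab x = omega -> p l (toY x g) = toY (p l x) g)
  (p_omega : forall x, lab x = omega -> p omega x = x)
  (* the twist e in R_G(Y), with pointwise inverse einv *)
  (e einv : Y -> R)
  (e_equiv : forall (y : Y) (g : gT), e (toY y g) = toR (e y) g)
  (e_inv : forall y, e y * einv y = 1 /\ einv y * e y = 1)
  (* the G-stable subring T of R *)
  (T : {pred R}) (T_subring : GRing.subring_closed T)
  (T_stable : forall (g : gT) (r : R), r \in T -> toR r g \in T)
  (* condition (star) *)
  (star : forall y, exists2 mi : R,
            mfun einv omega lab p e y * mi = 1 /\ mi * mfun einv omega lab p e y = 1
          & mfun einv omega lab p e y \in T /\ mi \in T) :
  let conv := tconv einv in
  let AT' := AT einv omega lab p e toY toR T in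
  let BT' := BT einv omega lab p e toY toR T in
  let CT' := CT einv omega lab p e toY toR T in
  (* B^T acts on C^T on the right, by A^T-linear maps *)
  (forall b c, BT' b -> CT' c ->
     CT' (conv c b) /\ forall a, AT' a -> conv a (conv c b) = conv (conv a c) b) /\
  (* A^T acts on C^T on the left, by B^T-linear maps *)
  (forall a c, AT' a -> CT' c ->
     CT' (conv a c) /\ forall b, BT' b -> conv (conv a c) b = conv a (conv c b)) /\
  (* End_{A^T}(C^T) = B^T : every A^T-endomorphism is right convolution by some b ... *)
  (forall phi : mat R Y -> mat R Y,
     (forall c, CT' c -> CT' (phi c)) ->
     (forall c c', CT' c -> CT' c' -> phi (c + c') = phi c + phi c') ->
     (forall a c, AT' a -> CT' c -> phi (conv a c) = conv a (phi c)) ->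
     exists2 b, BT' b & forall c, CT' c -> phi c = conv c b) /\
  (* ... and b is unique *)
  (forall b b', BT' b -> BT' b' -> (forall c, CT' c -> conv c b = conv c b') -> b = b') /\
  (* End_{B^T}(C^T) = A^T : every B^T-endomorphism is left convolution by some a ... *)
  (forall phi : mat R Y -> mat R Y,
     (forall c, CT' c -> CT' (phi c)) ->
     (forall c c', CT' c -> CT' c' -> phi (c + c') = phi c + phi c') ->
     (forall b c, BT' b -> CT' c -> phi (conv c b) = conv (phi c) b) ->
     exists2 a, AT' a & forall c, CT' c -> phi c = conv a c) /\
  (* ... and a is unique *)
  (forall a a', AT' a -> AT' a' -> (forall c, CT' c -> conv a c = conv a' c) -> a = a') /\
  (* B^T = 1_omega * A^T * 1_omega *)
  (forall b, BT' b <->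
     exists2 a, AT' a & b = conv (conv (oneL lab e omega) a) (oneL lab e omega)).
Proof.
move=> *; apply: main; assumption.
Qed.
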